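(* Let $E$ be a basic set of size $n\ge2$ in a signed group containing at least one pair of anticommuting elements. Then for some $k\in\{1,\dots,n\}$ there exist a replacement $E'$ of $E$ and a partition into disjoint sets $E'=F_0\cup F_1\cup\cdots\cup F_k$ such that each $F_j$, $j\ge1$, is anticommutative of size at least $2$, $F_0$ is commutative, and $F_j\circ F_{j'}=1$ for all $j\neq j'$, $0\le j,j'\le k$.
   Context: A signed group is a group containing a central element $-1\neq1$ with $(-1)^2=1$ such that any two elements either commute or anticommute ($ef=-fe$), and each element $e$ has $e^2\in\{\pm1\}$. For sets, $A\circ B=1$ means every element of $A$ commutes with every element of $B$. For a sequence $\mathbf e$ and finitary $0$-$1$ sequence $\mathbf p$, $\mathbf e^{\mathbf p}=e_1^{p_1}e_2^{p_2}\cdots$. A set is basic if no product $\mathbf e^{\mathbf p}$ of its elements with $\mathbf p\neq\mathbf 0$ equals $\pm1$; it generates $\{\pm\mathbf e^{\mathbf p}\}$; a replacement is another basic set generating the same group. A set is anticommutative (commutative) if its distinct elements pairwise anticommute (commute); singletons and $\emptyset$ count as both. *)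

(* Defs.v *)
From HB Require Import structures.
From mathcomp Require Import all_boot.

Set Implicit Arguments.
Unset Strict Implicit.
Unset Printing Implicit Defensive.

Local Open Scope group_scope.

(* (G, m) is a signed group, m being the element written -1 in the paper. *)
Definition signed_group (G : groupType) (m : G) : Prop :=
  [/\ m <> 1, m * m = 1, (forall x : G, m * x = x * m),
      (forall x y : G, x * y = y * x \/ x * y = m * (y * x)) &
      (forall e : G, e * e = 1 \/ e * e = m)].

Definition anticommute (G : groupType) (m x y : G) : Prop := x * y = m * (y * x).

Definition seqpow (G : groupType) (e : seq G) (p : bitseq) : G :=
  \prod_(x <- mask p e) x.

Definition basic (G : groupType) (m : G) (E : seq G) : Prop :=
  uniq E /\
  forall p : bitseq, size p = size E -> has id p ->
    seqpow E p <> 1 /\ seqpow E p <> m.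

Definition generated (G : groupType) (m : G) (E : seq G) (g : G) : Prop :=
  exists2 p : bitseq, size p = size E &
    (g = seqpow E p \/ g = m * seqpow E p).

Definition replacement (G : groupType) (m : G) (E E' : seq G) : Prop :=
  basic m E' /\ forall g : G, generated m E' g <-> generated m E g.

Definition anticommutative (G : groupType) (m : G) (F : seq G) : Prop :=
  forall x y, x \in F -> y \in F -> x != y -> anticommute m x y.

Definition commutative_set (G : groupType) (F : seq G) : Prop :=
  forall x y, x \in F -> y \in F -> x * y = y * x.

Definition commute_sets (G : groupType) (A B : seq G) : Prop :=
  forall x y, x \in A -> y \in B -> x * y = y * x.

(* Main.v *)
Require Import Defs.
From mathcomp Require Import all_boot.
Local Open Scope group_scope.
Set Implicit Arguments.
Unset Strict Implicit.
Set Warnings "-notation-overridden".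

Lemma sg_m1 (G : groupType) (m : G) : signed_group m -> m <> 1.
Proof. by case. Qed.
Lemma sg_mm (G : groupType) (m : G) : signed_group m -> m * m = 1.
Proof. by case. Qed.
Lemma sg_mc (G : groupType) (m : G) : signed_group m -> forall x, m * x = x * m.
Proof. by case. Qed.
Lemma sg_ca (G : groupType) (m : G) : signed_group m ->
  forall x y : G, x * y = y * x \/ x * y = m * (y * x).
Proof. by case. Qed.
Lemma sg_sq (G : groupType) (m : G) : signed_group m ->
  forall e : G, e * e = 1 \/ e * e = m.
Proof. by case. Qed.

Fixpoint gs (G : groupType) (m : G) (E : seq G) : seq G :=
  if E is x :: E' then gs m E' ++ map (fun g => x * g) (gs m E') else [:: 1; m].

Lemma gs_cons (G : groupType) (m : G) x E g :
  (g \in gs m (x :: E)) = (g \in gs m E) || (x^-1 * g \in gs m E).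
Proof.
rewrite /= mem_cat; congr (_ || _).
apply/mapP/idP => [[h hin ->]|hin]; first by rewrite mulKg.
by exists (x^-1 * g); rewrite // mulVKg.
Qed.

Lemma gs_sub_cons (G : groupType) (m : G) x E g :
  g \in gs m E -> g \in gs m (x :: E).
Proof. by rewrite gs_cons => ->. Qed.

Lemma gs_1 (G : groupType) (m : G) E : 1 \in gs m E.
Proof. elim: E => [|x E IH] /=; first by rewrite inE eqxx. by rewrite mem_cat IH. Qed.

Lemma gs_m (G : groupType) (m : G) E : m \in gs m E.
Proof. elim: E => [|x E IH] /=; first by rewrite !inE eqxx orbT. by rewrite mem_cat IH. Qed.

Lemma gs_mem (G : groupType) (m : G) E x : x \in E -> x \in gs m E.
Proof.
elim: E => [|y E IH] //; rewrite inE => /orP [/eqP ->|/IH]; last exact: gs_sub_cons.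
by rewrite gs_cons mulVg gs_1 orbT.
Qed.

Lemma gs_consP (G : groupType) (m : G) x E g :
  g \in gs m (x :: E) -> exists2 g', g' \in gs m E & (g = g' \/ g = x * g').
Proof.
rewrite gs_cons => /orP[h|h]; first by exists g; auto.
by exists (x^-1 * g); last by right; rewrite mulVKg.
Qed.

Lemma gs_consx (G : groupType) (m : G) x E g :
  g \in gs m E -> x * g \in gs m (x :: E).
Proof. by move=> h; rewrite gs_cons mulKg h orbT. Qed.

Lemma gs_mul (G : groupType) (m : G) E : signed_group m ->
  forall g h, g \in gs m E -> h \in gs m E -> g * h \in gs m E.
Proof.
move=> hs; elim: E => [|x E IH] g h.
  rewrite /= !inE => /orP[] /eqP -> /orP[] /eqP ->;
  by rewrite ?mul1g ?mulg1 ?(sg_mm hs) ?eqxx ?orbT.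
move=> /gs_consP [g' hg [->|->]] /gs_consP [h' hh [->|->]].
- by apply: gs_sub_cons; apply: (IH).
- have [e|e] := sg_ca hs g' x.
    by rewrite mulgA e -mulgA; apply: gs_consx; apply: (IH).
  rewrite mulgA e -!mulgA mulgA (sg_mc hs x) -mulgA; apply: gs_consx.
  by rewrite IH // ?gs_m // IH.
- by rewrite -mulgA; apply: gs_consx; apply: (IH).
- have [e|e] := sg_ca hs g' x.
    rewrite -mulgA (mulgA g') e -!mulgA mulgA.
    have [s|s] := sg_sq hs x; rewrite s ?mul1g; apply: gs_sub_cons.
      by rewrite IH.
    by apply: (IH); [exact: gs_m | exact: IH].
  rewrite -mulgA (mulgA g') e -!mulgA mulgA.
  rewrite -(sg_mc hs x) -!mulgA (mulgA x x); apply: gs_sub_cons.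
  have [s|s] := sg_sq hs x; rewrite s ?mul1g.
    by apply: (IH); [exact: gs_m | exact: IH].
  by rewrite mulgA (sg_mm hs) mul1g; apply: (IH).
Qed.

Lemma gs_inv (G : groupType) (m : G) E : signed_group m ->
  forall g, g \in gs m E -> g^-1 \in gs m E.
Proof.
move=> hs g hg; have [s|s] := sg_sq hs g.
  by rewrite (mulg1_eq s).
have -> : g^-1 = m * g.
  by apply: mulg1_eq; rewrite mulgA -(sg_mc hs) -mulgA s (sg_mm hs).
by apply: gs_mul => //; exact: gs_m.
Qed.

Lemma gs_subset (G : groupType) (m : G) E L : signed_group m ->
  (forall x, x \in L -> x \in gs m E) -> {subset gs m L <= gs m E}.
Proof.
move=> hs; elim: L => [|x L IH] hL g.
  by rewrite /= !inE => /orP[] /eqP ->; rewrite ?gs_1 ?gs_m.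
move=> /gs_consP [g' hg [->|->]].
  by apply: IH => // y hy; apply: hL; rewrite inE hy orbT.
apply: gs_mul => //; first by apply: hL; rewrite inE eqxx.
by apply: IH => // y hy; apply: hL; rewrite inE hy orbT.
Qed.

Lemma gs_comm (G : groupType) (m : G) L z : signed_group m ->
  (forall x, x \in L -> x * z = z * x) -> forall g, g \in gs m L -> g * z = z * g.
Proof.
move=> hs; elim: L => [|x L IH] hL g.
  by rewrite /= !inE => /orP[] /eqP ->; rewrite ?mul1g ?mulg1 ?(sg_mc hs).
have hL' : forall y, y \in L -> y * z = z * y.
  by move=> y hy; apply: hL; rewrite inE hy orbT.
move=> /gs_consP [g' hg [->|->]]; first exact: IH.
by rewrite -mulgA (IH hL' g' hg) mulgA hL ?inE ?eqxx // -mulgA.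
Qed.

Lemma size_gs (G : groupType) (m : G) E : size (gs m E) = (2 ^ (size E).+1)%N.
Proof. by elim: E => [|x E IH] //=; rewrite size_cat size_map IH [in RHS]expnS mul2n addnn. Qed.

Lemma seqpow_cons (G : groupType) (x : G) E b p :
  seqpow (x :: E) (b :: p) = (if b then x * seqpow E p else seqpow E p).
Proof. by rewrite /seqpow; case: b => //=; rewrite big_cons. Qed.

Lemma gen_gs (G : groupType) (m : G) E g : signed_group m ->
  generated m E g <-> g \in gs m E.
Proof.
move=> hs; elim: E g => [|x E IH] g.
  split.
    by case=> [[|b p]] // _ [] ->; rewrite /seqpow /= big_nil ?mulg1 !inE eqxx ?orbT.
  rewrite !inE => /orP[] /eqP ->; exists [::] => //.
    by left; rewrite /seqpow big_nil.
  by right; rewrite /seqpow big_nil mulg1.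
split.
  case=> [[|b p]] // [sp] [] ->; rewrite seqpow_cons; case: b.
  - by apply: gs_consx; apply/IH; exists p => //; left.
  - by apply: gs_sub_cons; apply/IH; exists p => //; left.
  - by rewrite mulgA (sg_mc hs) -mulgA; apply: gs_consx; apply/IH; exists p => //; right.
  - by apply: gs_sub_cons; apply/IH; exists p => //; right.
move=> /gs_consP [g' /IH [p sp hp] [->|->]].
  by exists (false :: p); rewrite /= ?sp // !seqpow_cons.
exists (true :: p); rewrite /= ?sp // !seqpow_cons.
case: hp => ->; [left | right] => //.
by rewrite mulgA -(sg_mc hs) -mulgA.
Qed.

Lemma gs_uniq_cons (G : groupType) (m : G) x E : signed_group m ->
  uniq (gs m (x :: E)) = uniq (gs m E) && (x \notin gs m E).
Proof.
move=> hs; rewrite /= cat_uniq (map_inj_uniq (mulgI x)).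
case: (uniq (gs m E)); rewrite /= ?andbT ?andbF //; congr negb.
apply/hasP/idP => [[y /mapP [h hh ->] hy]|hx].
  by rewrite -(mulgK h x); apply: gs_mul => //; apply: gs_inv.
by exists (x * 1); [apply/mapP; exists 1; rewrite ?gs_1 | rewrite mulg1].
Qed.

Lemma basic_nil (G : groupType) (m : G) : basic m [::].
Proof. by split => // [[|b p]]. Qed.

Lemma basic_cons (G : groupType) (m : G) x E : signed_group m ->
  basic m (x :: E) <-> basic m E /\ x \notin gs m E.
Proof.
move=> hs; split.
  case=> /= /andP [xE uE] hb; split.
    split => // p sp hp.
    by have := hb (false :: p); rewrite /= sp seqpow_cons => /(_ erefl hp).
  apply/negP => /(gen_gs _ _ hs) [p sp hp].
  have := hb (true :: p); rewrite /= sp seqpow_cons => /(_ erefl erefl) [].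
  case: hp => -> h1 h2; have [s|s] := sg_sq hs (seqpow E p).
  - by apply: h1.
  - by apply: h2.
  - by apply: h2; rewrite -mulgA s mulg1.
  - by apply: h1; rewrite -mulgA s (sg_mm hs).
case=> [[uE hb] hx]; split.
  by rewrite /= uE andbT; apply: contra hx; exact: gs_mem.
move=> [|b p] //= [sp]; rewrite seqpow_cons; case: b => /= hp; last exact: hb.
have hq : seqpow E p \in gs m E by apply/(gen_gs _ _ hs); exists p => //; left.
split=> e.
  move/negP: hx; apply; rewrite -(mulgK (seqpow E p) x) e mul1g.
  exact: gs_inv.
move/negP: hx; apply; rewrite -(mulgK (seqpow E p) x) e.
by apply: gs_mul => //; [exact: gs_m | exact: gs_inv].
Qed.

Lemma basic_gs (G : groupType) (m : G) E : signed_group m ->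
  basic m E <-> uniq (gs m E).
Proof.
move=> hs; elim: E => [|x E IH].
  split=> _; last exact: basic_nil.
  by rewrite /= inE andbT eq_sym; apply/eqP; exact: sg_m1.
rewrite gs_uniq_cons //; split.
  by move/(basic_cons _ _ hs) => [/IH -> ->].
by move/andP => [/IH h1 h2]; apply/(basic_cons _ _ hs).
Qed.

Lemma uniq_crit (G : groupType) (m : G) E E' :
  uniq (gs m E) -> size E' = size E -> {subset gs m E <= gs m E'} ->
  uniq (gs m E').
Proof.
move=> u s sub; apply: (leq_size_uniq u sub).
by rewrite !size_gs s.
Qed.

Lemma uniq_gs_behead (G : groupType) (m : G) x E :
  uniq (gs m (x :: E)) -> uniq (gs m E).
Proof. by rewrite /= cat_uniq => /andP []. Qed.

Lemma uniq_gs_uniq (G : groupType) (m : G) E : signed_group m ->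
  uniq (gs m E) -> uniq E.
Proof.
move=> hs; elim: E => [|x E IH] //.
rewrite gs_uniq_cons // => /andP [u hx] /=; rewrite IH // andbT.
by apply: contra hx; exact: gs_mem.
Qed.

Lemma ac_sym (G : groupType) (m : G) x z : signed_group m ->
  anticommute m x z -> anticommute m z x.
Proof.
move=> hs; rewrite /anticommute => e.
by rewrite e mulgA (sg_mm hs) mul1g.
Qed.

Lemma ac_ncm (G : groupType) (m : G) x z : signed_group m ->
  anticommute m x z -> x * z = z * x -> False.
Proof.
move=> hs; rewrite /anticommute => -> e; apply: (sg_m1 hs).
by apply: (mulIg (z * x)); rewrite mul1g.
Qed.

Lemma ncm_ac (G : groupType) (m : G) x z : signed_group m ->
  ~ (x * z = z * x) -> anticommute m x z.
Proof. by move=> hs h; case: (sg_ca hs x z). Qed.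

Lemma mul_cc (G : groupType) (x y z : G) :
  x * z = z * x -> y * z = z * y -> (x * y) * z = z * (x * y).
Proof. by move=> e1 e2; rewrite -mulgA e2 mulgA e1 mulgA. Qed.

Lemma mul_ac (G : groupType) (m : G) (x y z : G) :
  anticommute m x z -> y * z = z * y -> anticommute m (x * y) z.
Proof. by rewrite /anticommute => e1 e2; rewrite -mulgA e2 mulgA e1 !mulgA. Qed.

Lemma mul_ca (G : groupType) (m : G) (x y z : G) : signed_group m ->
  x * z = z * x -> anticommute m y z -> anticommute m (x * y) z.
Proof.
rewrite /anticommute => hs e1 e2.
by rewrite -mulgA e2 mulgA -(sg_mc hs) -mulgA (mulgA x z) e1 -(mulgA z x y).
Qed.

Lemma mul_aa (G : groupType) (m : G) (x y z : G) : signed_group m ->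
  anticommute m x z -> anticommute m y z -> (x * y) * z = z * (x * y).
Proof.
rewrite /anticommute => hs e1 e2.
rewrite -mulgA e2 mulgA -(sg_mc hs) -mulgA (mulgA x z) e1.
by rewrite -!mulgA (mulgA m m) (sg_mm hs) mul1g.
Qed.

Definition fix_ab (G : groupType) (a b c : G) : G :=
  c * (if c * b == b * c then 1 else a) * (if c * a == a * c then 1 else b).

Lemma fix_comm_a (G : groupType) (m a b c : G) : signed_group m ->
  anticommute m a b -> fix_ab a b c * a = a * fix_ab a b c.
Proof.
move=> hs hab; rewrite /fix_ab.
have hba := ac_sym hs hab.
case: eqP => hcb; case: eqP => hca; rewrite ?mulg1.
- by [].
- exact: (mul_aa hs (ncm_ac hs hca) hba).
- exact: (mul_cc hca (erefl (a * a))).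
- exact: (mul_aa hs (mul_ac (ncm_ac hs hca) (erefl (a * a))) hba).
Qed.

Lemma fix_comm_b (G : groupType) (m a b c : G) : signed_group m ->
  anticommute m a b -> fix_ab a b c * b = b * fix_ab a b c.
Proof.
move=> hs hab; rewrite /fix_ab.
case: eqP => hcb; case: eqP => hca; rewrite ?mulg1.
- by [].
- exact: (mul_cc hcb (erefl (b * b))).
- exact: (mul_aa hs (ncm_ac hs hcb) hab).
- exact: (mul_cc (mul_aa hs (ncm_ac hs hcb) hab) (erefl (b * b))).
Qed.

Definition decomp (G : groupType) (m : G) (E' : seq G) (k : nat) (F : nat -> seq G) :=
  [/\ perm_eq E' (flatten [seq F j | j <- iota 0 k.+1]),
      (forall j, (1 <= j <= k)%N -> anticommutative m (F j) /\ (2 <= size (F j))%N),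
      commutative_set (F 0%N) &
      (forall j j', (j <= k)%N -> (j' <= k)%N -> j != j' -> commute_sets (F j) (F j'))].

Lemma mem_decomp (G : groupType) (E : seq G) k (F : nat -> seq G) j x :
  perm_eq E (flatten [seq F j | j <- iota 0 k.+1]) -> (j <= k)%N -> x \in F j -> x \in E.
Proof.
move=> hp hj hx; rewrite (perm_mem hp); apply/flattenP; exists (F j) => //.
by apply/mapP; exists j; rewrite // mem_iota add0n ltnS hj.
Qed.

Lemma main_gen (G : groupType) (m : G) : signed_group m ->
  forall n (E : seq G), (size E <= n)%N -> uniq (gs m E) ->
  exists k E' F, [/\ (k <= size E)%N, size E' = size E,
     {subset gs m E' <= gs m E}, {subset gs m E <= gs m E'} & decomp m E' k F].
Proof.
move=> hs; elim=> [|n IHn] E hn uE.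
  case: E hn uE => // _ _; exists 0%N, [::], (fun _ => [::]); split => //.
  split => //; by case.
case: (boolP (all (fun x => all (fun y => x * y == y * x) E) E)) => hall.
  exists 0%N, E, (fun _ => E); split => //.
  split => //=; first by rewrite cats0.
  - by case.
  - move=> x y hx hy; move/allP: hall => /(_ x hx) /allP /(_ y hy); exact: eqP.
  - by case=> // [] [].
move/allPn: hall => [a ha /allPn [b hb hab]].
have hab' : anticommute m a b by apply: ncm_ac => // /eqP; rewrite (negbTE hab).
have nab : a != b by apply: contraNneq hab => ->.
have uE' := uniq_gs_uniq hs uE.
pose R := rem b (rem a E).
have hbR : b \in rem a E by rewrite mem_rem_uniq // inE eq_sym nab hb.
have hRE : forall c, c \in R -> c \in E.
  by move=> c /mem_rem /mem_rem.
pose E1 := map (fix_ab a b) R.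
pose E0 := a :: b :: E1.
have sE : size E = (size R).+2.
  have h1 := size_rem ha; have h2 := size_rem hbR.
  have p1 : (0 < size (rem a E))%N by case: (rem a E) hbR.
  have p0 : (0 < size E)%N by case: (E) ha.
  by rewrite /R h2 prednK // h1 prednK.
have hfix : forall c, fix_ab a b c * (if c * a == a * c then 1 else b)^-1
    * (if c * b == b * c then 1 else a)^-1 = c by move=> c; rewrite /fix_ab !mulgK.
have hfixE : forall c, c \in E -> fix_ab a b c \in gs m E.
  move=> c hc; rewrite /fix_ab; apply: gs_mul => //; first apply: gs_mul => //.
  - exact: gs_mem.
  - by case: ifP => _; [exact: gs_1 | exact: gs_mem].
  - by case: ifP => _; [exact: gs_1 | exact: gs_mem].
have hE0E : {subset gs m E0 <= gs m E}.
  apply: gs_subset => // x; rewrite !inE => /or3P [/eqP->|/eqP->|/mapP [c hc ->]].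
  - exact: gs_mem.
  - exact: gs_mem.
  - exact/hfixE/hRE.
have hE1E0 : {subset gs m E1 <= gs m E0}.
  by apply: gs_subset => // x hx; apply: gs_mem; rewrite !inE hx !orbT.
have hEE0 : {subset gs m E <= gs m E0}.
  apply: gs_subset => // x hx.
  case: (eqVneq x a) => [->|xa]; first by apply: gs_mem; rewrite inE eqxx.
  case: (eqVneq x b) => [->|xb]; first by apply: gs_mem; rewrite !inE eqxx orbT.
  have hxR : x \in R by rewrite /R mem_rem_uniq ?rem_uniq // inE xb mem_rem_uniq // inE xa.
  rewrite -(hfix x); apply: gs_mul => //; first apply: gs_mul => //.
  - by apply: gs_mem; rewrite !inE; apply/orP; right; apply/orP; right; apply: map_f.
  - by apply: gs_inv => //; case: ifP => _; [exact: gs_1 | apply: gs_mem; rewrite !inE eqxx orbT].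
  - by apply: gs_inv => //; case: ifP => _; [exact: gs_1 | apply: gs_mem; rewrite !inE eqxx].
have sE0 : size E0 = size E by rewrite /E0 /E1 /= size_map sE.
have uE0 : uniq (gs m E0) := uniq_crit uE sE0 hEE0.
have uE1 : uniq (gs m E1) := uniq_gs_behead (uniq_gs_behead uE0).
have hca : forall g, g \in gs m E1 -> g * a = a * g.
  apply: (@gs_comm G m E1 a hs) => x; rewrite /E1 => /mapP [c _ ->]; exact: (fix_comm_a c hs hab').
have hcb : forall g, g \in gs m E1 -> g * b = b * g.
  apply: (@gs_comm G m E1 b hs) => x; rewrite /E1 => /mapP [c _ ->]; exact: (fix_comm_b c hs hab').
have sE1R : size E1 = size R by rewrite /E1 size_map.
have sE1 : (size E1 <= n)%N by move: hn; rewrite sE sE1R ltnS => /ltnW.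
have [k1 [E2 [F1 [hk1 sE2 s21 s12 [hp hblk hF0 hcross]]]]] := IHn E1 sE1 uE1.
have hE2E1 : forall x, x \in E2 -> x \in gs m E1 by move=> x /(gs_mem m) /s21.
exists k1.+1, (E2 ++ [:: a; b]), (fun j => if (j <= k1)%N then F1 j else [:: a; b]).
split.
- by rewrite sE -sE1R ltnS; exact: leqW.
- by rewrite size_cat sE2 sE1R sE addn2.
- move=> g hg; apply: hE0E; move: g hg; apply: gs_subset => // x.
  rewrite mem_cat => /orP [/hE2E1 /hE1E0 //|]; rewrite !inE => /orP [] /eqP ->;
  by apply: gs_mem; rewrite !inE eqxx ?orbT.
- move=> g /hEE0; move: g; apply: gs_subset => // x.
  rewrite !inE => /or3P [/eqP->|/eqP->|hx].
  + by apply: gs_mem; rewrite mem_cat !inE eqxx !orbT.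
  + by apply: gs_mem; rewrite mem_cat !inE eqxx !orbT.
  + have := s12 x (gs_mem m hx); move: x {hx}; apply: gs_subset => // x hx.
    by apply: gs_mem; rewrite mem_cat hx.
have hE2 : forall j x, (j <= k1)%N -> x \in F1 j -> x \in gs m E1.
  by move=> j x hj hx; apply: hE2E1; exact: mem_decomp hp hj hx.
split.
- rewrite -addn1 iotaD map_cat flatten_cat add0n.
  have -> : flatten [seq (if (j <= k1)%N then F1 j else [:: a; b]) | j <- iota (k1.+1) 1]
     = [:: a; b] by rewrite /= ltnn.
  have -> : [seq (if (j <= k1)%N then F1 j else [:: a; b]) | j <- iota 0 k1.+1] =
            [seq F1 j | j <- iota 0 k1.+1].
    by apply/eq_in_map => j; rewrite mem_iota add0n ltnS => /= ->.
  by rewrite perm_cat2r.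
- move=> j /andP [j1 jk]; case: ifP => hj; first by apply: hblk; rewrite j1.
  split=> // x y; rewrite !inE => /orP [] /eqP -> /orP [] /eqP ->; rewrite ?eqxx //.
  by move=> _; exact: ac_sym.
- by [].
- move=> j j' hj hj' hjj'; case: ifP => hjk; case: ifP => hjk'.
  + exact: hcross.
  + move=> x y hx; rewrite !inE => /orP [] /eqP ->.
    * by rewrite (hca x (hE2 j x hjk hx)).
    * by rewrite (hcb x (hE2 j x hjk hx)).
  + move=> x y; rewrite !inE => /orP [] /eqP -> hy.
    * by rewrite (hca y (hE2 j' y hjk' hy)).
    * by rewrite (hcb y (hE2 j' y hjk' hy)).
  + exfalso; move: hjj'; have -> : j = k1.+1 by apply/eqP; rewrite eqn_leq hj ltnNge hjk.
    suff -> : j' = k1.+1 by rewrite eqxx.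
    by apply/eqP; rewrite eqn_leq hj' ltnNge hjk'.
Qed.

Theorem theorem5p6 (G : groupType) (m : G) (E : seq G) :
  signed_group m ->
  basic m E ->
  (2 <= size E)%N ->
  (exists x y : G, [/\ generated m E x, generated m E y & anticommute m x y]) ->
  exists (k : nat) (E' : seq G) (F : nat -> seq G),
    [/\ (1 <= k <= size E)%N /\ replacement m E E',
        perm_eq E' (flatten [seq F j | j <- iota 0 k.+1]),
        (forall j, (1 <= j <= k)%N -> anticommutative m (F j) /\ (2 <= size (F j))%N),
        commutative_set (F 0%N) &
        (forall j j', (j <= k)%N -> (j' <= k)%N -> j != j' -> commute_sets (F j) (F j'))].
Proof.
move=> hs /(basic_gs _ hs) uE _ [x [y [hx hy hxy]]].
have [k [E' [F [hk sE' s1 s2 [hp hblk hF0 hcross]]]]] := main_gen hs (leqnn (size E)) uE.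
exists k, E', F; split=> //; split.
  rewrite hk andbT lt0n; apply/negP => /eqP k0; move: hp hF0; rewrite k0 /= cats0 => hp hF0.
  have hc : commutative_set E' by move=> u v hu hv; apply: hF0; rewrite -(perm_mem hp).
  have hall : forall g, g \in gs m E' -> forall h, h \in gs m E' -> g * h = h * g.
    move=> g hg h hh; apply/esym; apply: (@gs_comm G m E' g hs _ h hh) => e he.
    apply/esym; apply: (@gs_comm G m E' e hs _ g hg) => e' he'; exact: hc.
  apply: (ac_ncm hs hxy); apply: hall; apply: s2; exact/(gen_gs _ _ hs).
split.
  by apply/(basic_gs _ hs); exact: (uniq_crit uE sE' s2).
move=> g; split => /(gen_gs _ _ hs) hg; apply/(gen_gs _ _ hs).
  exact: s1.
exact: s2.
Qed.
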